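(* Let $A$ be the generic $a_1\times\dots\times a_n$ table and let $\Gamma$ be any collection of subsets of $\{1,\dots,n\}$. Then $I(A)+L_\Gamma$ is a radical ideal of $R$, where $L_\Gamma=\sum_{\mathscr J\in\Gamma}L_{\mathscr J}$.
   Context: $\mathbb K$ is a field, $R=\mathbb K[x_{i_1,\dots,i_n}:1\le i_j\le a_j]$, $A=(x_{i_1,\dots,i_n})$. For a tuple $\sigma$ with $\sigma_j\in\{1,\dots,a_j\}\cup\{+\}$, $x_\sigma$ is the sum of all $x_{i_1,\dots,i_n}$ with $i_j=\sigma_j$ whenever $\sigma_j\ne+$. For $\mathscr J\subseteq\{1,\dots,n\}$, $L_{\mathscr J}$ is the ideal generated by all $x_\sigma$ with $\sigma_j\in\{1,\dots,a_j\}$ for $j\in\mathscr J$ and $\sigma_j=+$ for $j\notin\mathscr J$. $I(A)$ is the ideal generated by all generalized $2\times 2$ minors $\det\begin{pmatrix} x_{i_1,\dots,i_n} & x_{j_1,\dots,j_{l-1},i_l,j_{l+1},\dots,j_n}\\ x_{i_1,\dots,i_{l-1},j_l,i_{l+1},\dots,i_n} & x_{j_1,\dots,j_n}\end{pmatrix}$ (the ideal of the Segre variety). *)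

(* Defs.v *)
From HB Require Import structures.
From mathcomp Require Import all_boot all_algebra.
From mathcomp Require Import mpoly.
Set Implicit Arguments. Unset Strict Implicit. Unset Printing Implicit Defensive.
Import GRing.Theory.
Local Open Scope ring_scope.

(* Index tuples (i_1,...,i_n) with i_j in {0,...,a_j - 1} (0-based version of {1..a_j}). *)
Definition idx (n : nat) (a : 'I_n -> nat) := {dffun forall j : 'I_n, 'I_(a j)}.

Definition nvar (n : nat) (a : 'I_n -> nat) : nat := #|{: idx a}|.

(* The polynomial ring R, with one variable per index tuple. *)
Definition Rpoly (K : fieldType) (n : nat) (a : 'I_n -> nat) := {mpoly K[nvar a]}.

Definition var (K : fieldType) (n : nat) (a : 'I_n -> nat) (t : idx a) : Rpoly K a :=
  'X_(enum_rank t).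

Definition upd (n : nat) (a : 'I_n -> nat) (t u : idx a) (l : 'I_n) : idx a :=
  [ffun j => if j == l then u j else t j].

(* Generalized 2x2 minor det [[x_t, x_{u with l:=t_l}], [x_{t with l:=u_l}, x_u]]. *)
Definition gminor (K : fieldType) (n : nat) (a : 'I_n -> nat) (t u : idx a) (l : 'I_n)
  : Rpoly K a :=
  var K t * var K u - var K (upd u t l) * var K (upd t u l).

(* Partial tuples sigma: sigma_j = Some i  or  None (standing for "+"). *)
Definition ptuple (n : nat) (a : 'I_n -> nat) := {dffun forall j : 'I_n, option 'I_(a j)}.

Definition matches (n : nat) (a : 'I_n -> nat) (s : ptuple a) (t : idx a) : bool :=
  [forall j, match s j with Some k => t j == k | None => true end].

Definition xsigma (K : fieldType) (n : nat) (a : 'I_n -> nat) (s : ptuple a) : Rpoly K a :=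
  \sum_(t : idx a | matches s t) var K t.

Definition is_minor (K : fieldType) (n : nat) (a : 'I_n -> nat) (p : Rpoly K a) : Prop :=
  exists (t u : idx a) (l : 'I_n), p = gminor K t u l.

Definition is_Lgen (K : fieldType) (n : nat) (a : 'I_n -> nat) (J : {set 'I_n})
  (p : Rpoly K a) : Prop :=
  exists s : ptuple a, (forall j, (s j != None) = (j \in J)) /\ p = xsigma K s.

Definition ideal_gen (R : comNzRingType) (S : R -> Prop) (p : R) : Prop :=
  exists (m : nat) (g c : 'I_m -> R), (forall i, S (g i)) /\ p = \sum_(i < m) c i * g i.

Definition radical (R : comNzRingType) (I : R -> Prop) : Prop :=
  forall (p : R) (k : nat), I (p ^+ k) -> I p.

(* Main.v *)
Require Import Defs.
From HB Require Import structures.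
From mathcomp Require Import all_boot all_algebra.
From mathcomp Require Import mpoly ring zify.
Set Implicit Arguments. Unset Strict Implicit. Unset Printing Implicit Defensive.
Import GRing.Theory.
Local Open Scope ring_scope.

Section Ideal.
Variables (R : comNzRingType) (S : R -> Prop).
Local Notation Id := (ideal_gen S).

Lemma Id0 : Id 0.
Proof. exists 0%N, (fun _ => 0), (fun _ => 0); split; last by rewrite big_ord0.
by case. Qed.

Lemma Idgen p : S p -> Id p.
Proof. move=> Sp; exists 1%N, (fun _ => p), (fun _ => 1); split => //.
by rewrite big_ord1 mul1r. Qed.

Lemma IdD p q : Id p -> Id q -> Id (p + q).
Proof.
move=> [m1 [g1 [c1 [H1 ->]]]] [m2 [g2 [c2 [H2 ->]]]].
exists (m1 + m2)%N, (fun i => match split i with inl x => g1 x | inr y => g2 y end),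
  (fun i => match split i with inl x => c1 x | inr y => c2 y end); split.
  by move=> i; case: (split i).
rewrite big_split_ord; congr (_ + _); apply: eq_bigr => i _.
  by rewrite -[lshift _ _]/(unsplit (inl _)) unsplitK.
by rewrite -[rshift _ _]/(unsplit (inr _)) unsplitK.
Qed.

Lemma IdMl c p : Id p -> Id (c * p).
Proof.
move=> [m [g [d [H ->]]]]; exists m, g, (fun i => c * d i); split => //.
by rewrite mulr_sumr; apply: eq_bigr => i _; rewrite mulrA.
Qed.

Lemma IdMr c p : Id p -> Id (p * c).
Proof. by move=> h; rewrite mulrC; apply: IdMl. Qed.

Lemma IdN p : Id p -> Id (- p).
Proof. by move=> h; rewrite -mulN1r; apply: IdMl. Qed.

Lemma IdB p q : Id p -> Id q -> Id (p - q).
Proof. by move=> hp hq; apply: IdD => //; apply: IdN. Qed.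

Lemma Id_sum (I : Type) (r : seq I) (P : pred I) (F : I -> R) :
  (forall i, P i -> Id (F i)) -> Id (\sum_(i <- r | P i) F i).
Proof. by move=> h; elim/big_rec: _ => [|i x Pi hx]; [apply: Id0 | apply: IdD => //; apply: h]. Qed.

Lemma Id_eq p q : p = q -> Id p -> Id q.
Proof. by move=> ->. Qed.
End Ideal.

Section Distr.
Variables (S : comNzRingType) (n : nat) (a : 'I_n -> nat).
Lemma distr_dep (F : forall j : 'I_n, 'I_(a j) -> S) (t0 : idx a) :
  \prod_(j : 'I_n) \sum_(i : 'I_(a j)) F j i = \sum_(t : idx a) \prod_j F j (t j).
Proof.
case: n a F t0 => [|n'] a' F t0.
  rewrite big_ord0 (big_pred1 t0) ?big_ord0 // => t.
  have -> : t = t0 by apply/ffunP => -[].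
  by rewrite !inE eqxx.
pose P' := {j : 'I_n'.+1 & 'I_(a' j)}.
pose j0 : P' := Tagged (fun j => 'I_(a' j)) (t0 ord0).
have inner j : \sum_(i : 'I_(a' j)) F j i =
    \sum_(p : P' | tag p == j) F (tag p) (tagged p).
  have -> : \sum_(i : 'I_(a' j)) F j i =
     \sum_(j' | j' == j) \sum_(i : 'I_(a' j')) F j' i by rewrite big_pred1_eq.
  rewrite (sig_big_dep (fun j' => j' == j) (fun _ _ => true) F).
  by apply: eq_bigl => p; rewrite andbT.
rewrite (eq_bigr _ (fun j _ => inner j)).
rewrite (big_distr_big_dep j0 predT (fun j (p : P') => tag p == j)
   (fun _ (p : P') => F (tag p) (tagged p))).
pose h (t : idx a') : {ffun 'I_n'.+1 -> P'} := [ffun j => Tagged (fun j => 'I_(a' j)) (t j)].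
pose h' (f : {ffun 'I_n'.+1 -> P'}) : idx a' :=
  [ffun j => untag (t0 j) (fun x : 'I_(a' j) => x) (f j)].
rewrite (reindex_onto h h').
  apply: eq_big => [t|t _]; last by apply: eq_bigr => j _; rewrite ffunE.
  apply/andP; split.
    apply/pfamilyP; split; first exact/subsetP.
    by move=> j _; rewrite /= ffunE unfold_in /=.
  apply/eqP/ffunP => j; rewrite !ffunE.
  by rewrite /untag /=; case: eqP => //= p; rewrite [p]eq_axiomK.
move=> f /pfamilyP [_ Hf]; apply/ffunP => j; rewrite !ffunE.
have e : tag (f j) = j by apply/eqP; have := Hf j isT; rewrite unfold_in.
by rewrite (untagE _ _ e) etaggedK.
Qed.
End Distr.

Section Main.
Variables (K : fieldType) (n : nat) (a : 'I_n -> nat) (Gamma : {set {set 'I_n}}).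
Variable t0 : idx a.
Local Notation R := (Rpoly K a).
Definition Gen (p : R) : Prop := is_minor p \/ exists2 J : {set 'I_n}, J \in Gamma & is_Lgen J p.
Local Notation Id := (ideal_gen Gen).

Definition P' := {j : 'I_n & 'I_(a j)}.
Definition Q := option P'.
Definition NS := #|{: Q}|.
Local Notation S := {mpoly K[NS]}.
Definition rk0 : 'I_NS := enum_rank (None : Q).
Definition rkj j (i : 'I_(a j)) : 'I_NS := enum_rank (Some (Tagged (fun j => 'I_(a j)) i) : Q).
Arguments rkj : clear implicits.
Definition sv0 : S := 'X_rk0.
Definition sv j (i : 'I_(a j)) : S := 'X_(rkj j i).
Arguments sv : clear implicits.
Definition z j : 'I_(a j) := t0 j.
Definition w j (i : 'I_(a j)) : S :=
  if i == z j then sv j i - \sum_(i' | i' != z j) sv j i' else sv j i.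
Arguments w : clear implicits.
Definition phih (k : 'I_(nvar a)) : S := sv0 * \prod_j w j ((enum_val k) j).
Definition phi := mmap (mpolyC (R:=K) NS) phih.
HB.instance Definition _ := GRing.RMorphism.on phi.

Definition chih (k : 'I_NS) : S :=
  match enum_val k with
  | None => 'X_k
  | Some p => if tagged p == z (tag p) then \sum_i sv (tag p) i else 'X_k
  end.
Definition chi := mmap (mpolyC (R:=K) NS) chih.
HB.instance Definition _ := GRing.RMorphism.on chi.

Lemma phiM p q : phi (p * q) = phi p * phi q. Proof. exact: rmorphM. Qed.
Lemma phiD p q : phi (p + q) = phi p + phi q. Proof. exact: rmorphD. Qed.
Lemma phiB p q : phi (p - q) = phi p - phi q. Proof. exact: rmorphB. Qed.
Lemma phi0E : phi 0 = 0. Proof. exact: rmorph0. Qed.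
Lemma phi1 : phi 1 = 1. Proof. exact: rmorph1. Qed.
Lemma phiX p k : phi (p ^+ k) = phi p ^+ k. Proof. exact: rmorphXn. Qed.
Lemma phi_sum (I : Type) (r : seq I) (P : pred I) (F : I -> R) :
  phi (\sum_(i <- r | P i) F i) = \sum_(i <- r | P i) phi (F i).
Proof. exact: rmorph_sum. Qed.
Lemma phi_prod (I : Type) (r : seq I) (P : pred I) (F : I -> R) :
  phi (\prod_(i <- r | P i) F i) = \prod_(i <- r | P i) phi (F i).
Proof. exact: rmorph_prod. Qed.
Lemma phiZ c p : phi (c *: p) = c *: phi p.
Proof. by rewrite -!mul_mpolyC phiM /phi mmapC. Qed.
Lemma chiM p q : chi (p * q) = chi p * chi q. Proof. exact: rmorphM. Qed.
Lemma chiD p q : chi (p + q) = chi p + chi q. Proof. exact: rmorphD. Qed.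
Lemma chiB p q : chi (p - q) = chi p - chi q. Proof. exact: rmorphB. Qed.
Lemma chi0 : chi 0 = 0. Proof. exact: rmorph0. Qed.
Lemma chi_sum (I : Type) (r : seq I) (P : pred I) (F : I -> S) :
  chi (\sum_(i <- r | P i) F i) = \sum_(i <- r | P i) chi (F i).
Proof. exact: rmorph_sum. Qed.
Lemma chi_prod (I : Type) (r : seq I) (P : pred I) (F : I -> S) :
  chi (\prod_(i <- r | P i) F i) = \prod_(i <- r | P i) chi (F i).
Proof. exact: rmorph_prod. Qed.

Lemma phi_var t : phi (var K t) = sv0 * \prod_j w j (t j).
Proof. by rewrite /phi /var mmapX mmap1U /phih enum_rankK. Qed.

Lemma chi_sv0 : chi sv0 = sv0.
Proof. by rewrite /chi /sv0 mmapX mmap1U /chih /rk0 enum_rankK. Qed.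

Lemma chi_sv j i : chi (sv j i) = if i == z j then \sum_i' sv j i' else sv j i.
Proof. by rewrite /chi /sv mmapX mmap1U /chih /rkj enum_rankK /=; case: ifP. Qed.

Lemma chi_w j i : chi (w j i) = sv j i.
Proof.
rewrite /w; case: ifP => [/eqP ->|]; last by rewrite chi_sv => ->.
rewrite chiB chi_sum chi_sv eqxx (bigD1 (z j)) //=.
under [X in _ - X]eq_bigr => i' ne do rewrite chi_sv (negbTE ne).
by rewrite addrK.
Qed.

Definition Ut (t : idx a) : 'X_{1..NS} := (U_(rk0) + \sum_j U_(rkj j (t j)))%MM.

Definition phi0 p := chi (phi p).

Lemma phi0_var t : phi0 (var K t) = 'X_[Ut t].
Proof.
rewrite /phi0 phi_var chiM chi_sv0 chi_prod /Ut mpolyXD -mprodXE.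
by congr (_ * _); apply: eq_bigr => j _; rewrite chi_w.
Qed.

Definition prodL (L : seq (idx a)) : R := \prod_(t <- L) var K t.
Definition col j (L : seq (idx a)) : seq 'I_(a j) := map (fun t : idx a => t j) L.

Lemma perm_swap2 (T : eqType) (x y : T) s1 s2 :
  perm_eq (x :: s1 ++ y :: s2) (y :: s1 ++ x :: s2).
Proof. apply/permP => p; rewrite /= !count_cat /=; lia. Qed.

Lemma updE (t u : idx a) l j : upd t u l j = if j == l then u j else t j.
Proof. by rewrite /upd ffunE. Qed.

Lemma swap_step (v w : idx a) l r1 r2 :
  Id (prodL (v :: r1 ++ w :: r2) - prodL (upd v w l :: r1 ++ upd w v l :: r2)).
Proof.
have -> : prodL (v :: r1 ++ w :: r2) - prodL (upd v w l :: r1 ++ upd w v l :: r2)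
   = gminor K v w l * (prodL r1 * prodL r2).
  rewrite /prodL /gminor !big_cons !big_cat /= !big_cons; ring.
apply: IdMr; apply: Idgen; left; by exists v, w, l.
Qed.

Lemma swap_cols (v w : idx a) l r1 r2 j :
  perm_eq (col j (v :: r1 ++ w :: r2)) (col j (upd v w l :: r1 ++ upd w v l :: r2)).
Proof.
rewrite /col /= !map_cat /= !updE.
by case: eqP => _; [apply: perm_swap2 | apply: perm_refl].
Qed.

Definition ST (L L1 : seq (idx a)) :=
  [/\ Id (prodL L - prodL L1), size L = size L1 & forall j, perm_eq (col j L) (col j L1)].

Lemma ST_trans L1 L2 L3 : ST L1 L2 -> ST L2 L3 -> ST L1 L3.
Proof.
move=> [h1 s1 p1] [h2 s2 p2]; split.
- by rewrite -[_ - _](subrKA (prodL L2)); apply: IdD.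
- by rewrite s1.
- by move=> j; exact: (@perm_trans _ _ _ _ (p1 j) (p2 j)).
Qed.

Lemma head_to (u : idx a) (k : nat) : forall (v : idx a) (rest : seq (idx a)),
  (#|[set j | v j != u j]| <= k)%N -> (forall j, u j \in col j (v :: rest)) ->
  exists rest1, ST (v :: rest) (u :: rest1).
Proof.
elim: k => [|k IH] v rest hc hu.
  have -> : v = u.
    apply/ffunP => j; apply/eqP; apply/negP => /negP hj.
    by move: hc; rewrite leqn0 => /eqP /card0_eq /(_ j); rewrite inE hj.
  exists rest; split; [by rewrite subrr; apply: Id0 | by [] | by move=> j].
have [/eqP veq|] := boolP (#|[set j | v j != u j]| == 0%N).
  by apply: (IH v rest) => //; rewrite veq.
rewrite -lt0n card_gt0 => /set0Pn [l]; rewrite inE => hl.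
have : u l \in col l rest.
  by move: (hu l); rewrite /col /= inE eq_sym (negbTE hl).
case/mapP => w wr ul.
move: hu; case/splitPr: wr => r1 r2 hu.
have H1 : (#|[set j | upd v w l j != u j]| <= k)%N.
  rewrite -ltnS; apply: leq_trans hc; apply: proper_card.
  apply/properP; split.
    by apply/subsetP => j; rewrite !inE updE; case: (j =P l) => [->|//]; rewrite -ul eqxx.
  by exists l; rewrite !inE ?updE ?eqxx // ul eqxx.
have H2 : forall j, u j \in col j (upd v w l :: r1 ++ upd w v l :: r2).
  move=> j; rewrite -(perm_mem (swap_cols v w l r1 r2 j)); apply: hu.
have [rest1 H] := IH _ _ H1 H2.
exists rest1; apply: ST_trans H; split.
- exact: swap_step.
- by rewrite /= !size_cat.
- move=> j; exact: swap_cols.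
Qed.

Lemma swap_all (L' : seq (idx a)) : forall L : seq (idx a), size L = size L' ->
  (forall j, perm_eq (col j L) (col j L')) -> Id (prodL L - prodL L').
Proof.
elim: L' => [|u L' IH] [|v rest] //= hs hp.
  by rewrite subrr; apply: Id0.
have hu : forall j, u j \in col j (v :: rest).
  by move=> j; rewrite (perm_mem (hp j)) /col /= mem_head.
have [rest1 [h1 s1 p1]] := head_to (k := #|[set j | v j != u j]|) (leqnn _) hu.
have IH1 : Id (prodL rest1 - prodL L').
  apply: IH; first by move: s1 hs => /= [<-] [].
  move=> j; have q : perm_eq (col j (u :: rest1)) (col j (v :: rest)) by rewrite perm_sym.
  have := @perm_trans _ _ _ _ q (hp j); by rewrite /col /= perm_cons.
rewrite -[_ - _](subrKA (prodL (u :: rest1))); apply: IdD => //.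
have -> : prodL (u :: rest1) - prodL (u :: L') = var K u * (prodL rest1 - prodL L').
  by rewrite /prodL !big_cons mulrBr.
exact: IdMl.
Qed.

Definition mono (L : seq (idx a)) : 'X_{1..NS} := (\sum_(t <- L) Ut t)%MM.

Lemma sum_eq1 (T : finType) (x : T) : (\sum_(i : T) (x == i))%N = 1%N.
Proof.
rewrite (bigD1 x) //= eqxx big1 // => i /negbTE; rewrite eq_sym => ->. by [].
Qed.

Lemma rkj_eq j j' (i : 'I_(a j)) (i' : 'I_(a j')) :
  (rkj j i == rkj j' i') = (Tagged (fun j => 'I_(a j)) i == Tagged (fun j => 'I_(a j)) i').
Proof. by rewrite /rkj (inj_eq enum_rank_inj). Qed.

Lemma rk0_rkj j i : (rk0 == rkj j i) = false.
Proof. by rewrite /rk0 /rkj (inj_eq enum_rank_inj). Qed.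

Lemma Ut_rk0 t : Ut t rk0 = 1%N.
Proof.
rewrite /Ut mnmDE mnm1E eqxx mnm_sumE big1 // => j _.
by rewrite mnm1E eq_sym rk0_rkj.
Qed.

Lemma Ut_rkj t j i : Ut t (rkj j i) = (t j == i).
Proof.
rewrite /Ut mnmDE mnm1E rk0_rkj add0n mnm_sumE (bigD1 j) //= big1 ?addn0.
  by rewrite mnm1E rkj_eq eq_Tagged.
move=> j' hj; rewrite mnm1E rkj_eq; case: eqP => // /(congr1 tag) /= e.
by rewrite e eqxx in hj.
Qed.

Lemma rk_cases (k : 'I_NS) : k = rk0 \/ exists j (i : 'I_(a j)), k = rkj j i.
Proof.
rewrite -(enum_valK k) /rk0 /rkj; case: (enum_val k) => [[j i]|]; last by left.
by right; exists j, i.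
Qed.

Lemma mono_cons t L : mono (t :: L) = (Ut t + mono L)%MM.
Proof. by rewrite /mono big_cons. Qed.

Lemma mono_rk0 L : mono L rk0 = size L.
Proof.
elim: L => [|t L IH]; first by rewrite /mono big_nil mnm0E.
by rewrite mono_cons mnmDE Ut_rk0 IH.
Qed.

Lemma mono_rkj L j i : mono L (rkj j i) = count_mem i (col j L).
Proof.
elim: L => [|t L IH]; first by rewrite /mono big_nil mnm0E.
by rewrite mono_cons mnmDE Ut_rkj IH /= eq_sym.
Qed.

Lemma mono_perm L L' : mono L = mono L' ->
  size L = size L' /\ forall j, perm_eq (col j L) (col j L').
Proof.
move=> e; split; first by rewrite -!mono_rk0 e.
move=> j; apply/allP => i _; apply/eqP.
by rewrite -!mono_rkj e.
Qed.

Definition bal (m : 'X_{1..NS}) (d : nat) :=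
  m rk0 = d /\ forall j, (\sum_(i : 'I_(a j)) m (rkj j i))%N = d.

Lemma bal_mono L : bal (mono L) (size L).
Proof.
split; first exact: mono_rk0.
move=> j; under eq_bigr => i _ do rewrite mono_rkj.
rewrite -(size_map (fun t : idx a => t j)) -/(col j L).
elim: (col j L) => [|x s IH] /=; first by rewrite big1.
by rewrite big_split /= IH sum_eq1.
Qed.

Lemma bal0 m : bal m 0 -> m = 0%MM.
Proof.
move=> [h0 hj]; apply/mnmP => k; rewrite mnm0E.
case: (rk_cases k) => [->|[j [i ->]]] //.
by move/eqP: (hj j); rewrite sum_nat_eq0 => /forallP /(_ i) /eqP.
Qed.

Fixpoint Fr (h : idx a -> R) (d : nat) (m : 'X_{1..NS}) : R :=
  match d with
  | 0 => 1
  | d'.+1 => match [pick c : idx a | (Ut c <= m)%MM] with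
             | Some c => h c * Fr h d' (m - Ut c)%MM
             | None => 0 end
  end.

Lemma Fr_dec h d : forall m, bal m d ->
  exists L, [/\ size L = d, mono L = m & Fr h d m = \prod_(t <- L) h t].
Proof.
elim: d => [|d IH] m hb.
  by exists [::]; rewrite (bal0 hb) big_nil /mono big_nil.
have ex : exists c : idx a, (Ut c <= m)%MM.
  pose c : idx a := [ffun j => odflt (t0 j) [pick i | (0 < m (rkj j i))%N]].
  exists c; apply/mnm_lepP => k; case: (rk_cases k) => [->|[j [i ->]]].
    by rewrite Ut_rk0 (proj1 hb).
  rewrite Ut_rkj /c ffunE; case: pickP => [i' hi'|h0] /=.
    by case: eqP => [<-|] //.
  have := proj2 hb j; rewrite big1 // => i'' _; apply/eqP.
  by rewrite -leqn0 leqNgt h0.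
have [c hc] : {c : idx a | (Ut c <= m)%MM}.
  case: (pickP (fun c : idx a => (Ut c <= m)%MM)) => [c hc|h0]; first by exists c.
  by exfalso; case: ex => c; rewrite h0.
have hb' : forall c, (Ut c <= m)%MM -> bal (m - Ut c)%MM d.
  move=> c' hc'; have e := submK hc'; split.
    by move: (proj1 hb); rewrite -{1}e mnmDE Ut_rk0 addn1 => -[].
  move=> j; move: (proj2 hb j); rewrite -{1}e.
  under eq_bigr => i _ do rewrite mnmDE Ut_rkj.
  by rewrite big_split /= sum_eq1 addn1 => -[].
rewrite /=; case: pickP => [c' hc'|h0]; last by rewrite h0 in hc.
have [L [s1 m1 f1]] := IH _ (hb' c' hc').
exists (c' :: L); split; first by rewrite /= s1.
  by rewrite mono_cons m1 addmC submK.
by rewrite f1 big_cons.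
Qed.


Lemma chiZ c p : chi (c *: p) = c *: chi p.
Proof. by rewrite -!mul_mpolyC chiM /chi mmapC. Qed.

Lemma phi0Z c p : phi0 (c *: p) = c *: phi0 p.
Proof. by rewrite /phi0 phiZ chiZ. Qed.
Lemma phi0D p q : phi0 (p + q) = phi0 p + phi0 q.
Proof. by rewrite /phi0 phiD chiD. Qed.
Lemma phi0_0 : phi0 0 = 0.
Proof. by rewrite /phi0 phi0E chi0. Qed.

Lemma phi0_prodL L : phi0 (prodL L) = 'X_[mono L].
Proof.
rewrite /phi0 /prodL phi_prod chi_prod /mono -mprodXE.
by apply: eq_bigr => t _; rewrite -/(phi0 _) phi0_var.
Qed.

Definition Lm (m : 'X_{1..nvar a}) : seq (idx a) :=
  flatten [seq nseq (m k) (enum_val k) | k <- enum 'I_(nvar a)].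

Lemma prod_nseq (T : Type) (F : T -> R) c x : \prod_(t <- nseq c x) F t = F x ^+ c.
Proof. by elim: c => [|c IH]; rewrite ?big_nil ?expr0 // /= big_cons IH exprS. Qed.

Lemma prodL_Lm m : prodL (Lm m) = 'X_[m].
Proof.
rewrite /prodL /Lm big_flatten big_map mpolyXE_id.
rewrite big_enum /=.
apply: eq_big => // k _; by rewrite prod_nseq /var enum_valK.
Qed.

Definition Fm (h : idx a -> R) (m : 'X_{1..NS}) : R := Fr h (m rk0) m.
Definition NF (h : idx a -> R) (q : S) : R := \sum_(m <- msupp q) q@_m *: Fm h m.

Lemma NF_sum h q (r : seq 'X_{1..NS}) : uniq r -> {subset msupp q <= r} ->
  NF h q = \sum_(m <- r) q@_m *: Fm h m.
Proof.
move=> ur sub; rewrite [RHS](bigID (fun m => m \in msupp q)) /=.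
rewrite [X in _ = _ + X]big1 ?addr0; last first.
  by move=> m /memN_msupp_eq0 ->; rewrite scale0r.
rewrite -big_filter /NF; apply: perm_big; apply: uniq_perm.
- exact: msupp_uniq.
- exact: filter_uniq.
- by move=> m; rewrite mem_filter; case: (boolP (m \in msupp q)) => // /sub ->.
Qed.

Lemma NFD h p q : NF h (p + q) = NF h p + NF h q.
Proof.
pose r := undup (msupp p ++ msupp q).
have ur : uniq r by apply: undup_uniq.
rewrite (NF_sum h (r := r)) //; last first.
  by move=> m /msuppD_le; rewrite mem_undup.
rewrite (NF_sum h (q := p) (r := r)) //; last by move=> m hm; rewrite mem_undup mem_cat hm.
rewrite (NF_sum h (q := q) (r := r)) //; last by move=> m hm; rewrite mem_undup mem_cat hm orbT.
by rewrite -big_split; apply: eq_bigr => m _; rewrite mcoeffD scalerDl.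
Qed.

Lemma NFZ h c p : NF h (c *: p) = c *: NF h p.
Proof.
rewrite (NF_sum h (q := c *: p) (r := msupp p)) ?msupp_uniq //; last exact: msuppZ_le.
by rewrite /NF scaler_sumr; apply: eq_bigr => m _; rewrite mcoeffZ scalerA.
Qed.

Lemma NF0 h : NF h 0 = 0.
Proof. by rewrite /NF msupp0 big_nil. Qed.

Lemma NFX h m : NF h 'X_[m] = Fm h m.
Proof. by rewrite /NF msuppX big_seq1 mcoeffX eqxx scale1r. Qed.

Lemma kernel_aux p : Id (p - NF (@var K n a) (phi0 p)).
Proof.
elim/mpolyind: p => [|c m p _ _ IH].
  by rewrite phi0_0 NF0 subrr; apply: Id0.
rewrite phi0D NFD phi0Z NFZ.
have -> : c *: 'X_[m] + p - (c *: NF (@var K n a) (phi0 'X_[m]) + NF (@var K n a) (phi0 p)) =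
   c%:MP * ('X_[m] - NF (@var K n a) (phi0 'X_[m])) + (p - NF (@var K n a) (phi0 p)).
  by rewrite mul_mpolyC scalerBr; ring.
apply: IdD => //; apply: IdMl.
rewrite -prodL_Lm phi0_prodL NFX /Fm mono_rk0.
have [L [_ mL ->]] := Fr_dec (@var K n a) (bal_mono (Lm m)).
have [sL cL] := mono_perm mL.
by apply: (swap_all (L := Lm m) (L' := L)); [rewrite sL | move=> j; rewrite perm_sym].
Qed.

Lemma kernel p : phi p = 0 -> Id p.
Proof.
move=> h; have := kernel_aux p; rewrite /phi0 h chi0 NF0 subr0. by [].
Qed.

Section SP.
Variable Pm : 'X_{1..NS} -> Prop.
Definition SP (q : S) := forall m, m \in msupp q -> Pm m.
Lemma SP0 : SP 0. Proof. by move=> m; rewrite msupp0. Qed.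
Lemma SPD p q : SP p -> SP q -> SP (p + q).
Proof. by move=> hp hq m /msuppD_le; rewrite mem_cat => /orP [/hp|/hq]. Qed.
Lemma SPB p q : SP p -> SP q -> SP (p - q).
Proof. by move=> hp hq m /msuppB_le; rewrite mem_cat => /orP [/hp|/hq]. Qed.
Lemma SPZ c p : SP p -> SP (c *: p).
Proof. by move=> hp m /msuppZ_le /hp. Qed.
Lemma SPX m : Pm m -> SP 'X_[m].
Proof. by move=> h m'; rewrite msuppX inE => /eqP ->. Qed.
Lemma SP_sum (I : Type) (r : seq I) (P : pred I) (F : I -> S) :
  (forall i, P i -> SP (F i)) -> SP (\sum_(i <- r | P i) F i).
Proof. by move=> h; elim/big_rec: _ => [|i x Pi hx]; [apply: SP0 | apply: SPD => //; apply: h]. Qed.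
Lemma SP_eq p q : p = q -> SP p -> SP q. Proof. by move=> ->. Qed.
End SP.

Lemma SP_impl (P1 P2 : 'X_{1..NS} -> Prop) q : (forall m, P1 m -> P2 m) -> SP P1 q -> SP P2 q.
Proof. by move=> h h1 m /h1 /h. Qed.

Definition hompred (d0 : nat) (D : 'I_n -> nat) (m : 'X_{1..NS}) :=
  m rk0 = d0 /\ forall j, (\sum_(i : 'I_(a j)) m (rkj j i))%N = D j.

Lemma homM p q d0 D e0 E : SP (hompred d0 D) p -> SP (hompred e0 E) q ->
  SP (hompred (d0 + e0) (fun j => D j + E j)%N) (p * q).
Proof.
move=> hp hq m /msuppM_le /allpairsP [[m1 m2] /= [h1 h2 ->]].
have [p0 pj] := hp _ h1; have [q0 qj] := hq _ h2.
split; first by rewrite mnmDE p0 q0.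
move=> j; under eq_bigr => i _ do rewrite mnmDE.
by rewrite big_split /= pj qj.
Qed.

Lemma hom1 : SP (hompred 0 (fun _ => 0%N)) 1.
Proof.
move=> m; rewrite msupp1 inE => /eqP ->; split; first by rewrite mnm0E.
by move=> j; rewrite big1 // => i _; rewrite mnm0E.
Qed.

Lemma hom_prod (I : Type) (r : seq I) (F : I -> S) d D :
  (forall i, SP (hompred (d i) (D i)) (F i)) ->
  SP (hompred (\sum_(i <- r) d i) (fun j => \sum_(i <- r) D i j)%N) (\prod_(i <- r) F i).
Proof.
move=> h; elim: r => [|x r IH].
  rewrite !big_nil; apply: (SP_impl (P1 := hompred 0 (fun _ => 0%N))); last exact: hom1.
  by move=> m [h0 hj]; split => // j; rewrite hj big_nil.
rewrite [\prod_(i <- _) _]big_cons big_cons; have := homM (h x) IH; apply: SP_impl => m [h0 hj]; split => //.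
by move=> j; rewrite hj big_cons.
Qed.

Lemma sum_rkj j j' (i : 'I_(a j)) :
  (\sum_(i' : 'I_(a j')) (rkj j i == rkj j' i'))%N = (j' == j).
Proof.
case: (j' =P j) => [e|ne].
  subst j'; under eq_bigr => i' _ do rewrite rkj_eq eq_Tagged /=.
  by rewrite sum_eq1.
rewrite big1 // => i' _; rewrite rkj_eq; case: eqP => // /(congr1 tag) /= e.
by case: ne.
Qed.

Lemma hom_sv j i : SP (hompred 0 (fun j' => (j' == j) : nat)) (sv j i).
Proof.
apply: SPX; split; first by rewrite mnm1E eq_sym rk0_rkj.
by move=> j'; under eq_bigr => i' _ do rewrite mnm1E; rewrite sum_rkj.
Qed.

Lemma hom_w j i : SP (hompred 0 (fun j' => (j' == j) : nat)) (w j i).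
Proof.
rewrite /w; case: ifP => _; last exact: hom_sv.
by apply: SPB; [apply: hom_sv | apply: SP_sum => i' _; apply: hom_sv].
Qed.

Lemma hom_sv0 : SP (hompred 1 (fun _ => 0%N)) sv0.
Proof.
apply: SPX; split; first by rewrite mnm1E eqxx.
by move=> j; rewrite big1 // => i _; rewrite mnm1E rk0_rkj.
Qed.

Lemma hom_phih k : SP (hompred 1 (fun _ => 1%N)) (phih k).
Proof.
have := (homM hom_sv0 (hom_prod (r := index_enum 'I_n) (F := fun j => w j (enum_val k j))
     (d := fun _ => 0%N) (D := fun j j' => (j' == j) : nat) (fun j => @hom_w j _))); apply: SP_impl => m [h0 hj].
split; first by rewrite h0 big1.
by move=> j; rewrite hj add0n sum_eq1.
Qed.

Lemma homX q d0 D e : SP (hompred d0 D) q -> SP (hompred (d0 * e) (fun j => D j * e)%N) (q ^+ e).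
Proof.
move=> h; elim: e => [|e IH].
  rewrite expr0; have := hom1; apply: SP_impl => m [h0 hj]; split; first by rewrite h0 muln0.
  by move=> j; rewrite hj muln0.
rewrite exprS; have := homM h IH; apply: SP_impl => m [h0 hj]; split.
  by rewrite h0 mulnS.
by move=> j; rewrite hj mulnS.
Qed.

Definition balpred (m : 'X_{1..NS}) := bal m (m rk0).

Lemma Bal_phi p : SP balpred (phi p).
Proof.
rewrite [p]mpolyE phi_sum; apply: SP_sum => m _; rewrite phiZ; apply: SPZ.
rewrite /phi mmapX /mmap1.
have := hom_prod (r := index_enum 'I_(nvar a)) (F := fun k => phih k ^+ m k)
   (d := fun k => (1 * m k)%N) (D := fun k _ => (1 * m k)%N) (fun k => @homX _ _ _ (m k) (@hom_phih k)).
apply: SP_impl => m' [h0 hj]; split => // j; by rewrite hj h0.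
Qed.

Definition matchj j (o : option 'I_(a j)) (i : 'I_(a j)) : bool :=
  if o is Some k then i == k else true.

Lemma phi_xsigma s : phi (xsigma K s) =
  sv0 * \prod_j \sum_(i : 'I_(a j)) (if matchj (s j) i then w j i else 0).
Proof.
rewrite (distr_dep _ t0) /xsigma phi_sum mulr_sumr big_mkcond /=.
apply: eq_bigr => t _; rewrite phi_var.
case: (boolP (matches s t)) => h.
  congr (_ * _); apply: eq_bigr => j _.
  by move/forallP: h => /(_ j); rewrite /matchj; case: (s j) => [k ->|] //.
move/forallPn: h => [j hj]; rewrite (bigD1 j) //= /matchj.
by move: hj; case: (s j) => [k|] // /negbTE ->; rewrite mul0r mulr0.
Qed.

Lemma Wsum j o : \sum_(i : 'I_(a j)) (if matchj o i then w j i else 0) =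
  if o is Some k then w j k else sv j (z j).
Proof.
case: o => [k|] /=.
  by rewrite -big_mkcond big_pred1_eq.
rewrite (bigD1 (z j)) //= {1}/w eqxx.
under eq_bigr => i hi do rewrite /w (negbTE hi).
by rewrite subrK.
Qed.

Definition sig (c : idx a) : ptuple a := [ffun j => if c j == z j then None else Some (c j)].
Definition hsig (c : idx a) : R := xsigma K (sig c).

Lemma phi_hsig c : phi (hsig c) = 'X_[Ut c].
Proof.
rewrite /hsig phi_xsigma /Ut mpolyXD -mprodXE; congr (_ * _).
apply: eq_bigr => j _; rewrite Wsum /sig ffunE.
case: eqP => [->|/eqP ne] //; by rewrite /w (negbTE ne).
Qed.

Lemma Fm_phi (h : idx a -> R) (hh : forall c, phi (h c) = 'X_[Ut c]) m :
  bal m (m rk0) -> phi (Fm h m) = 'X_[m].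
Proof.
move=> hb; have [L [_ mL e]] := Fr_dec h hb.
rewrite /Fm e phi_prod -mL /mono -mprodXE; apply: eq_bigr => t _; exact: hh.
Qed.

Lemma NF_phi (h : idx a -> R) (hh : forall c, phi (h c) = 'X_[Ut c]) q :
  SP balpred q -> phi (NF h q) = q.
Proof.
move=> hq; rewrite /NF phi_sum [RHS]mpolyE big_seq [RHS]big_seq.
by apply: eq_bigr => m hm; rewrite phiZ (Fm_phi hh (hq m hm)).
Qed.

Lemma bal_sub m d c : bal m d.+1 -> (Ut c <= m)%MM -> bal (m - Ut c)%MM d.
Proof.
move=> hb hc; have e := submK hc; split.
  by move: (proj1 hb); rewrite -{1}e mnmDE Ut_rk0 addn1 => -[].
move=> j; move: (proj2 hb j); rewrite -{1}e.
under eq_bigr => i _ do rewrite mnmDE Ut_rkj.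
by rewrite big_split /= sum_eq1 addn1 => -[].
Qed.

Definition Msetb (m : 'X_{1..NS}) : bool :=
  [exists J : {set 'I_n}, (J \in Gamma) &&
     [exists c : idx a, [forall j, (j \notin J) ==> (c j == z j)] && (Ut c <= m)%MM]].

Definition MP := SP (fun m => Msetb m).

Lemma Msetb_up m m' : Msetb m -> (m <= m')%MM -> Msetb m'.
Proof.
move=> /existsP [J /andP [JG /existsP [c /andP [hc hm]]]] hle.
apply/existsP; exists J; rewrite JG /=; apply/existsP; exists c.
by rewrite hc /=; apply: lepm_trans hle.
Qed.

Lemma Ut_le1 c k : (Ut c k <= 1)%N.
Proof. by case: (rk_cases k) => [->|[j [i ->]]]; rewrite ?Ut_rk0 ?Ut_rkj // leq_b1. Qed.

Lemma Msetb_mul m k : Msetb (m *+ k.+1)%MM -> Msetb m.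
Proof.
move=> /existsP [J /andP [JG /existsP [c /andP [hc hm]]]].
apply/existsP; exists J; rewrite JG /=; apply/existsP; exists c; rewrite hc /=.
apply/mnm_lepP => i; move/mnm_lepP: hm => /(_ i); rewrite mulmnE.
have := Ut_le1 c i; case: (m i) => [|x]; last by move=> h1 _; apply: leq_trans h1 _.
by rewrite mul0n.
Qed.

Lemma le0mm (m : 'X_{1..NS}) : (0 <= m)%MM.
Proof. by apply/mnm_lepP => i; rewrite mnm0E. Qed.

Lemma MP_mulr p q : MP p -> MP (p * q).
Proof.
move=> hp m /msuppM_le /allpairsP [[m1 m2] /= [h1 h2 ->]].
by apply: Msetb_up (hp _ h1) _; apply: lem_addr.
Qed.

Lemma MP_rad q k : MP (q ^+ k) -> MP q.
Proof.
case: (boolP (Msetb 0)) => [h0 _|h0].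
  by move=> m _; apply: Msetb_up h0 _; apply: le0mm.
case: k => [|k].
  by rewrite expr0 => /(_ 0%MM); rewrite msupp1 inE eqxx => /(_ isT) h; rewrite h in h0.
move=> hk.
pose q1 := \sum_(m <- msupp q | Msetb m) q@_m *: 'X_[m].
pose q2 := \sum_(m <- msupp q | ~~ Msetb m) q@_m *: 'X_[m].
have eq : q = q1 + q2 by rewrite {1}[q]mpolyE (bigID (fun m => Msetb m)).
have h1 : MP q1 by apply: SP_sum => m hm; apply: SPZ; apply: SPX.
have h2 : SP (fun m => ~~ Msetb m) q2 by apply: SP_sum => m hm; apply: SPZ; apply: SPX.
have [/eqP z2|nz2] := boolP (q2 == 0); first by rewrite eq z2 addr0.
exfalso.
have hq2 : MP (q2 ^+ k.+1).
  have -> : q2 ^+ k.+1 = q ^+ k.+1 - (q ^+ k.+1 - q2 ^+ k.+1) by rewrite opprB addrC subrK.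
  apply: SPB => //; rewrite subrXX.
  have -> : q - q2 = q1 by rewrite {1}eq addrK.
  exact: MP_mulr.
have nzk : q2 ^+ k.+1 != 0 by rewrite expf_neq0.
have := hq2 _ (mlead_supp nzk); rewrite mleadX // => /Msetb_mul.
by move: (h2 _ (mlead_supp nz2)) => /negbTE ->.
Qed.

Lemma phi_minor t u l : phi (gminor K t u l) = 0.
Proof.
have E : \prod_j w j (t j) * \prod_j w j (u j) =
         \prod_j w j (upd u t l j) * \prod_j w j (upd t u l j).
  rewrite -!big_split; apply: eq_bigr => j _ /=; rewrite !updE.
  by case: eqP => _ //; rewrite mulrC.
rewrite /gminor phiB !phiM !phi_var mulrACA [X in _ - X]mulrACA E.
by rewrite subrr.
Qed.

Definition cW j (o : option 'I_(a j)) (i : 'I_(a j)) : K :=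
  match o with
  | Some k => if k == z j then (if i == z j then 1 else -1) else (i == k)%:R
  | None => (i == z j)%:R
  end.

Lemma W_expand j (o : option 'I_(a j)) :
  (if o is Some k then w j k else sv j (z j)) = \sum_i cW o i *: sv j i.
Proof.
case: o => [k|] /=; last first.
  rewrite (bigD1 (z j)) //= eqxx scale1r big1 ?addr0 // => i /negbTE ->.
  by rewrite scale0r.
rewrite /w; case: eqP => [->|/eqP ne].
  rewrite [RHS](bigD1 (z j)) //= eqxx scale1r; congr (_ + _).
  rewrite -sumrN; apply: eq_bigr => i /negbTE ->; by rewrite scaleN1r.
rewrite [RHS](bigD1 k) //= eqxx scale1r big1 ?addr0 // => i /negbTE ->.
by rewrite scale0r.
Qed.

Lemma phi_Lgen (J : {set 'I_n}) (s : ptuple a) : J \in Gamma -> (forall j, (s j != None) = (j \in J)) ->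
  MP (phi (xsigma K s)).
Proof.
move=> JG hs; rewrite phi_xsigma.
under eq_bigr => j _ do rewrite Wsum W_expand.
rewrite (distr_dep _ t0) mulr_sumr; apply: SP_sum => c _.
rewrite scaler_prod -scalerAr.
have -> : sv0 * \prod_j sv j (c j) = 'X_[Ut c].
  by rewrite /Ut mpolyXD -mprodXE.
case: (boolP [forall j, (j \notin J) ==> (c j == z j)]) => hc.
  apply: SPZ; apply: SPX; apply/existsP; exists J; rewrite JG /=.
  by apply/existsP; exists c; rewrite hc /= lepm_refl.
move/forallPn: hc => [j]; rewrite negb_imply => /andP [hj hcj].
have sj : s j = None by move: (hs j); rewrite (negbTE hj); case: (s j).
rewrite (bigD1 j) //= sj /= (negbTE hcj) mul0r scale0r; exact: SP0.
Qed.

Lemma Id_phi q : Id q -> MP (phi q).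
Proof.
move=> [m [g [c [hg ->]]]]; rewrite phi_sum; apply: SP_sum => i _.
rewrite phiM mulrC; apply: MP_mulr.
case: (hg i) => [[t [u [l ->]]] | [J JG [s [hs ->]]]].
  by rewrite phi_minor; apply: SP0.
exact: phi_Lgen JG hs.
Qed.

Lemma Id_xsigma (J : {set 'I_n}) (s : ptuple a) : J \in Gamma ->
  (forall j, s j != None -> j \in J) -> Id (xsigma K s).
Proof.
move=> JG hs.
pose restr (t : idx a) : ptuple a := [ffun j => if j \in J then Some (t j) else None].
pose suppJ (s' : ptuple a) := [forall j, (s' j != None) == (j \in J)].
rewrite /xsigma (partition_big restr suppJ); last first.
  by move=> t _; apply/forallP => j; rewrite /restr ffunE; case: (j \in J).
apply: Id_sum => s' hs'.
case: (boolP [forall j, if s j is Some k then s' j == Some k else true]) => hc.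
  have -> : \sum_(t | matches s t && (restr t == s')) var K t = xsigma K s'.
    apply: eq_bigl => t; apply/idP/idP => [/andP [hm /eqP <-] | hm].
      by apply/forallP => j; rewrite /restr ffunE; case: (j \in J).
    apply/andP; split.
      apply/forallP => j; move: (forallP hc j) (forallP hm j).
      by case: (s j) => [k|] // /eqP ->.
    apply/eqP/ffunP => j; rewrite ffunE; move: (forallP hs' j) (forallP hm j).
    case: (s' j) => [k|] /=; case: (j \in J) => //; by move=> _ /eqP ->.
  apply: Idgen; right; exists J => //; exists s'; split => // j.
  by move/forallP: hs' => /(_ j) /eqP.
rewrite big_pred0; first exact: Id0.
move=> t; apply/negP => /andP [hm /eqP hr]; move/negP: hc; apply.
apply/forallP => j; move: (forallP hm j) (hs j); rewrite -hr /restr ffunE.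
by case: (s j) => [k|] // /eqP -> /(_ isT) ->.
Qed.

Lemma Id_Fm m : Msetb m -> bal m (m rk0) -> Id (Fm hsig m).
Proof.
move=> /existsP [J /andP [JG /existsP [c /andP [hc hm]]]] hb.
have : (1 <= m rk0)%N by move/mnm_lepP: hm => /(_ rk0); rewrite Ut_rk0.
case E: (m rk0) => [|d] // _.
have hb' : bal (m - Ut c)%MM d by move: hb; rewrite E => hb; apply: bal_sub hb hm.
have e0 : (m - Ut c)%MM rk0 = d by case: hb'.
have hD : Id (Fm hsig m - hsig c * Fm hsig (m - Ut c)%MM).
  apply: kernel; rewrite phiB phiM phi_hsig (Fm_phi phi_hsig hb).
  rewrite (Fm_phi phi_hsig (m := (m - Ut c)%MM)); last by rewrite e0.
  by rewrite -mpolyXD addmC submK ?subrr.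
have hs : Id (hsig c).
  apply: (Id_xsigma JG) => j; rewrite /sig ffunE.
  case: (c j =P z j) => // ne _; apply/negPn/negP => nj; apply: ne; apply/eqP.
  by move/forallP: hc => /(_ j); rewrite nj.
by rewrite -[Fm hsig m](subrK (hsig c * Fm hsig (m - Ut c)%MM)); apply: IdD => //; apply: IdMr.
Qed.

Lemma main_t0 : radical Id.
Proof.
move=> p k hk.
have hm : MP (phi p) by apply: (MP_rad (k := k)); rewrite -phiX; apply: Id_phi.
have hb := @Bal_phi p.
have e1 : Id (p - NF hsig (phi p)).
  by apply: kernel; rewrite phiB (NF_phi phi_hsig) // subrr.
have e2 : Id (NF hsig (phi p)).
  rewrite /NF big_seq; apply: Id_sum => m hm'.
  rewrite -mul_mpolyC; apply: IdMl; apply: Id_Fm; [exact: hm | exact: hb].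
by rewrite -(subrK (NF hsig (phi p)) p); apply: IdD.
Qed.
End Main.

Theorem lemma7p2 (K : fieldType) (n : nat) (a : 'I_n -> nat) (Gamma : {set {set 'I_n}}) :
  radical (ideal_gen (fun p : Rpoly K a =>
             is_minor p \/ exists2 J : {set 'I_n}, J \in Gamma & is_Lgen J p)).
Proof.
case: (pickP (fun _ : idx a => true)) => [t0 _ | hnone].
  exact: (@main_t0 K n a Gamma t0).
have gen0 : forall g : Rpoly K a,
    (is_minor g \/ exists2 J : {set 'I_n}, J \in Gamma & is_Lgen J g) -> g = 0.
  move=> g [[t _] | [J _ [s [_ ->]]]]; first by have := hnone t.
  by rewrite /xsigma big1 // => t; have := hnone t.
have id0 : forall g : Rpoly K a, ideal_gen (fun p : Rpoly K a =>
             is_minor p \/ exists2 J : {set 'I_n}, J \in Gamma & is_Lgen J p) g -> g = 0.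
  move=> g [m [g' [c [hg ->]]]]; rewrite big1 // => i _.
  by rewrite (gen0 _ (hg i)) mulr0.
move=> p k /id0 /eqP; rewrite expf_eq0 => /andP [_ /eqP ->].
exact: Id0.
Qed.
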